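(* Assume the setting in the context. For all $\boldsymbol\gamma\in(0,\infty)^n$ and $\gamma\in(0,2\beta)$, the composition $T_{1,\boldsymbol\gamma}T_{2,\gamma}$ is $\alpha$-averaged with $\alpha=\max\big(\tfrac23,\tfrac{2}{1+2\beta/\gamma}\big)$.
   Context: $\mathcal H$ is a real Hilbert space, $n\ge1$, $(\omega_i)_{i=1}^n\in(0,1)^n$ with $\sum_i\omega_i=1$; $A_1,\dots,A_n:\mathcal H\to2^{\mathcal H}$ are maximal monotone; $B:\mathcal H\to\mathcal H$ is single-valued and $\beta\in(0,\infty)$ is such that $\beta B$ is firmly nonexpansive. Resolvent $J_A=(\mathrm{Id}+A)^{-1}$, reflection $R_A=2J_A-\mathrm{Id}$. An operator $T$ is $\alpha$-averaged ($\alpha\in(0,1)$) if $T=(1-\alpha)\mathrm{Id}+\alpha R$ with $R$ nonexpansive; firmly nonexpansive means $\tfrac12$-averaged. Product space: $\boldsymbol{\mathcal H}=\mathcal H^n$ with inner product $\langle\!\langle\mathbf x,\mathbf y\rangle\!\rangle=\sum_i\omega_i\langle x_i,y_i\rangle$; $\mathbf S=\{\mathbf x: x_1=\dots=x_n\}$; $N_{\mathbf S}(\mathbf x)=\mathbf S^\perp$ if $\mathbf x\in\mathbf S$ and $\emptyset$ otherwise. For $\boldsymbol\gamma=(\gamma_i)\in(0,\infty)^n$, $\boldsymbol\gamma\mathbf A:\mathbf x\mapsto\prod_i\gamma_iA_i(x_i)$; $\mathbf B\mathbf x=(Bx_i)_i$. $T_{1,\boldsymbol\gamma}=\tfrac12[R_{\boldsymbol\gamma\mathbf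 A}R_{N_{\mathbf S}}+\mathrm{Id}]$, $T_{2,\gamma}=\mathrm{Id}-\gamma\mathbf BJ_{N_{\mathbf S}}$. *)

(* Defs.v *)
From Stdlib Require Import Reals.
From mathcomp Require Import all_boot.

Set Implicit Arguments.
Unset Strict Implicit.

Open Scope R_scope.

Record Hilbert := MkHilbert {
  hcar :> Type;
  hzero : hcar;
  hadd : hcar -> hcar -> hcar;
  hopp : hcar -> hcar;
  hscal : R -> hcar -> hcar;
  hinner : hcar -> hcar -> R;
  hadd_assoc : forall x y z, hadd x (hadd y z) = hadd (hadd x y) z;
  hadd_comm : forall x y, hadd x y = hadd y x;
  hadd_zero : forall x, hadd x hzero = x;
  hadd_opp : forall x, hadd x (hopp x) = hzero;
  hscal_assoc : forall a b x, hscal a (hscal b x) = hscal (a * b) x;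
  hscal_one : forall x, hscal 1 x = x;
  hscal_distr_vec : forall a x y, hscal a (hadd x y) = hadd (hscal a x) (hscal a y);
  hscal_distr_sc : forall a b x, hscal (a + b) x = hadd (hscal a x) (hscal b x);
  hinner_sym : forall x y, hinner x y = hinner y x;
  hinner_add_l : forall x y z, hinner (hadd x y) z = hinner x z + hinner y z;
  hinner_scal_l : forall a x y, hinner (hscal a x) y = a * hinner x y;
  hinner_pos : forall x, 0 <= hinner x x;
  hinner_def : forall x, hinner x x = 0 -> x = hzero;
  hcomplete : forall u : nat -> hcar,
    (forall eps, 0 < eps -> exists N, forall p q, (N <= p)%nat -> (N <= q)%nat ->
        sqrt (hinner (hadd (u p) (hopp (u q))) (hadd (u p) (hopp (u q)))) < eps) ->
    exists l, forall eps, 0 < eps -> exists N, forall p, (N <= p)%nat ->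
        sqrt (hinner (hadd (u p) (hopp l)) (hadd (u p) (hopp l))) < eps
}.

Arguments hzero {h}.
Arguments hadd {h}.
Arguments hopp {h}.
Arguments hscal {h}.
Arguments hinner {h}.

Definition hsub {H : Hilbert} (x y : H) : H := hadd x (hopp y).
Definition hnorm {H : Hilbert} (x : H) : R := sqrt (hinner x x).
Definition hlin {H : Hilbert} (a : R) (x : H) (b : R) (y : H) : H :=
  hadd (hscal a x) (hscal b y).

(* Set-valued operators X -> 2^X are relations: M x u  <->  u \in M x.    *)

Definition averaged_rel {X : Type} (lin : R -> X -> R -> X -> X)
    (dist : X -> X -> R) (alpha : R) (T : X -> X -> Prop) : Prop :=
  0 < alpha < 1 /\
  exists Rn : X -> X,
    (forall x y, dist (Rn x) (Rn y) <= dist x y) /\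
    (forall x z, T x z <-> z = lin (1 - alpha) x alpha (Rn x)).

Definition averaged {X : Type} (lin : R -> X -> R -> X -> X)
    (dist : X -> X -> R) (alpha : R) (T : X -> X) : Prop :=
  averaged_rel lin dist alpha (fun x z => z = T x).

Definition firmly_nonexpansive {X : Type} (lin : R -> X -> R -> X -> X)
    (dist : X -> X -> R) (T : X -> X) : Prop :=
  averaged lin dist (1/2) T.

(* resolvent J_M = (Id + M)^{-1}:  y \in J_M x  <->  x \in y + M y *)
Definition resolvent {X : Type} (lin : R -> X -> R -> X -> X)
    (M : X -> X -> Prop) : X -> X -> Prop :=
  fun x y => exists m, M y m /\ x = lin 1 y 1 m.

Definition reflection {X : Type} (lin : R -> X -> R -> X -> X)
    (M : X -> X -> Prop) : X -> X -> Prop :=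
  fun x z => exists y, resolvent lin M x y /\ z = lin 2 y (-1) x.

Definition monotone {H : Hilbert} (A : H -> H -> Prop) : Prop :=
  forall x u y v, A x u -> A y v -> 0 <= hinner (hsub x y) (hsub u v).

Definition maximal_monotone {H : Hilbert} (A : H -> H -> Prop) : Prop :=
  monotone A /\
  forall M : H -> H -> Prop, monotone M ->
    (forall x u, A x u -> M x u) -> (forall x u, M x u -> A x u).

Definition prodH (H : Hilbert) (n : nat) := 'I_n -> H.

Definition plin {H : Hilbert} {n : nat} (a : R) (x : prodH H n) (b : R)
    (y : prodH H n) : prodH H n := fun i => hlin a (x i) b (y i).

Definition pinner {H : Hilbert} {n : nat} (w : 'I_n -> R)
    (x y : prodH H n) : R :=
  \big[Rplus/0]_(i < n) (w i * hinner (x i) (y i)).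

Definition pdist {H : Hilbert} {n : nat} (w : 'I_n -> R)
    (x y : prodH H n) : R :=
  sqrt (pinner w (plin 1 x (-1) y) (plin 1 x (-1) y)).

Definition diagS {H : Hilbert} {n : nat} (x : prodH H n) : Prop :=
  forall i j, x i = x j.

Definition diagS_perp {H : Hilbert} {n : nat} (w : 'I_n -> R)
    (u : prodH H n) : Prop :=
  forall s, diagS s -> pinner w s u = 0.

Definition normal_cone_S {H : Hilbert} {n : nat} (w : 'I_n -> R)
    (x u : prodH H n) : Prop :=
  diagS x /\ diagS_perp w u.

Definition scaled_prod_op {H : Hilbert} {n : nat} (g : 'I_n -> R)
    (A : 'I_n -> H -> H -> Prop) (x u : prodH H n) : Prop :=
  forall i, exists a, A i (x i) a /\ u i = hscal (g i) a.

Definition prod_fun {H : Hilbert} {n : nat} (B : H -> H) (x : prodH H n)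
    : prodH H n := fun i => B (x i).

(* T_{1,gamma} = 1/2 [ R_{gamma A} R_{N_S} + Id ] *)
Definition T1 {H : Hilbert} {n : nat} (w : 'I_n -> R) (g : 'I_n -> R)
    (A : 'I_n -> H -> H -> Prop) : prodH H n -> prodH H n -> Prop :=
  fun x z => exists y v,
    reflection plin (normal_cone_S w) x y /\
    reflection plin (scaled_prod_op g A) y v /\
    z = plin (1/2) v (1/2) x.

(* T_{2,gamma} = Id - gamma B J_{N_S} *)
Definition T2 {H : Hilbert} {n : nat} (w : 'I_n -> R) (gam : R)
    (B : H -> H) : prodH H n -> prodH H n -> Prop :=
  fun x z => exists p,
    resolvent plin (normal_cone_S w) x p /\
    z = plin 1 x (- gam) (prod_fun B p).

(* composition of (set-valued) operators: (T U) x = T (U x) *)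
Definition rel_comp {X : Type} (T U : X -> X -> Prop) : X -> X -> Prop :=
  fun x z => exists y, U x y /\ T y z.

(* Main.v *)
Require Import Defs.
From HB Require Import structures.
From Stdlib Require Import Reals Lra Psatz ClassicalEpsilon Classical FunctionalExtensionality.
From mathcomp Require Import all_boot.
Open Scope R_scope.
Set Implicit Arguments.
Unset Strict Implicit.

Set Warnings "-redundant-canonical-projection".
HB.instance Definition _ := Monoid.isComLaw.Build R 0 Rplus (fun a b c => esym (Rplus_assoc a b c)) Rplus_comm Rplus_0_l.

Lemma hinner_zero_l (H : Hilbert) (y : H) : hinner hzero y = 0.
Proof. have := hinner_add_l hzero hzero y. rewrite hadd_zero. lra. Qed.

Lemma hinner_opp_l (H : Hilbert) (x y : H) : hinner (hopp x) y = - hinner x y.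
Proof. have := hinner_add_l x (hopp x) y. rewrite hadd_opp hinner_zero_l. lra. Qed.

Lemma hinner_add_r (H : Hilbert) (x y z : H) : hinner x (hadd y z) = hinner x y + hinner x z.
Proof. by rewrite hinner_sym hinner_add_l !(hinner_sym _ x). Qed.

Lemma hinner_scal_r (H : Hilbert) a (x y : H) : hinner x (hscal a y) = a * hinner x y.
Proof. by rewrite hinner_sym hinner_scal_l (hinner_sym y). Qed.

Lemma hinner_opp_r (H : Hilbert) (x y : H) : hinner x (hopp y) = - hinner x y.
Proof. by rewrite hinner_sym hinner_opp_l (hinner_sym y). Qed.

Lemma hinner_zero_r (H : Hilbert) (y : H) : hinner y hzero = 0.
Proof. by rewrite hinner_sym hinner_zero_l. Qed.

Ltac fld := field; repeat split; lra.

Ltac hexp := rewrite /hlin /hsub; repeat progress rewrite ?hinner_add_l ?hinner_scal_l ?hinner_opp_l ?hinner_zero_l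
   ?hinner_add_r ?hinner_scal_r ?hinner_opp_r ?hinner_zero_r.

Lemma hsub_zero (H : Hilbert) (a b : H) : hadd a (hopp b) = hzero -> a = b.
Proof.
move=> Hd.
have E : hadd (hopp b) b = hzero by rewrite hadd_comm hadd_opp.
by rewrite -[a]hadd_zero -E hadd_assoc Hd hadd_comm hadd_zero.
Qed.

Lemma veq (H : Hilbert) (a b : H) : (forall z, hinner a z = hinner b z) -> a = b.
Proof.
move=> E; apply: hsub_zero; apply: hinner_def.
rewrite hinner_add_l hinner_opp_l !E. lra.
Qed.

Ltac veqt := apply: veq => ?; hexp; field.

Lemma rel_in (H : Hilbert) (A : H -> H -> Prop) (x u : H) :
  maximal_monotone A ->
  (forall y v, A y v -> 0 <= hinner (hsub x y) (hsub u v)) -> A x u.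
Proof.
move=> [Hm Hmax] Hrel.
pose M := fun a b => A a b \/ (a = x /\ b = u).
apply: (Hmax M); last by right.
- move=> a b c d [Hab|[-> ->]] [Hcd|[-> ->]].
  + exact: Hm.
  + have := Hrel _ _ Hab. hexp. move=> h. hexp. lra.
  + exact: Hrel.
  + hexp. lra.
- by move=> ? ? ?; left.
Qed.

Definition ubd (H : Hilbert) (A : H -> H -> Prop) (x u : H) (c : R) :=
  forall y v, A y v -> hinner x v + hinner y u - hinner y v <= c.
Arguments ubd {H}.

Lemma ub_ge (H : Hilbert) (A : H -> H -> Prop) x u c :
  maximal_monotone A -> ubd A x u c -> hinner x u <= c.
Proof.
move=> hA hu.
apply: Rnot_lt_le => hlt.
have hx : A x u.
  apply: (rel_in hA) => y v hyv.
  have := hu _ _ hyv. hexp. rewrite (hinner_sym y u). lra.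
have := hu _ _ hx. lra.
Qed.

Lemma choice_nat (T : Type) (P : nat -> T -> Prop) :
  (forall k, exists t, P k t) -> exists f : nat -> T, forall k, P k (f k).
Proof.
move=> h. exists (fun k => proj1_sig (constructive_indefinite_description _ (h k))).
move=> k. exact: proj2_sig.
Qed.

Lemma sqrt_lt_sq (D e : R) : 0 <= D -> 0 < e -> D < e * e -> sqrt D < e.
Proof.
move=> hD he hDe. rewrite -(sqrt_square e); last lra.
apply: sqrt_lt_1_alt. lra.
Qed.

Lemma sq_of_sqrt_lt (D e : R) : 0 <= D -> sqrt D < e -> D < e * e.
Proof.
move=> hD hs. have h0 := sqrt_pos D.
rewrite -(sqrt_sqrt D hD). nra.
Qed.

Lemma cs_bound (H : Hilbert) (d W : H) t : 0 < t ->
  - hinner d W <= (t * hinner d d + hinner W W * / t) / 2.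
Proof.
move=> ht.
have := hinner_pos (hadd (hscal t d) W). hexp. rewrite (hinner_sym W d) => h.
have hs : 0 < / t by apply: Rinv_0_lt_compat.
have hts : t * / t = 1 by fld.
have e : / t * (t * (t * hinner d d + hinner d W) + (t * hinner d W + hinner W W))
   = t * hinner d d + 2 * hinner d W + hinner W W * / t by fld.
have := Rmult_le_pos _ _ (Rlt_le _ _ hs) h. rewrite e. lra.
Qed.

Lemma small_lam (K D : R) : 0 <= D -> (forall lam, 0 < lam < 1 -> 0 <= K + lam * D) -> 0 <= K.
Proof.
move=> hD h. apply: Rnot_lt_le => hK.
pose lam := - K / (D - K + 1).
have hden : 0 < D - K + 1 by lra.
have hl : lam * (D - K + 1) = - K by rewrite /lam; fld.
have hl0 : 0 < lam by rewrite /lam; apply: Rdiv_lt_0_compat; lra.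
have hl1 : lam < 1.
  apply: (Rmult_lt_reg_r (D - K + 1)) => //. rewrite hl. lra.
have := h lam (conj hl0 hl1). nra.
Qed.

Lemma INR_inv_le (N k : nat) : (N <= k)%nat -> / (INR k + 1) <= / (INR N + 1).
Proof.
move=> /leP hk. have := le_INR _ _ hk. have := pos_INR N => h1 h2.
apply: Rinv_le_contravar; lra.
Qed.

Lemma minty0 (H : Hilbert) (A : H -> H -> Prop) :
  maximal_monotone A -> exists y a, A y a /\ hadd y a = hzero.
Proof.
move=> hA.
have [Hm _] := hA.
have [y0 [v0 hy0]] : exists y v, A y v.
  apply: NNPP => hne. apply: (hne).
  exists hzero, hzero.
  apply: (rel_in hA) => y v hyv. exfalso; apply: hne; by exists y, v.
pose S := fun r => exists x u c, ubd A x u c /\ r = c + hinner x x / 2 + hinner u u / 2.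
have S0 : forall r, S r -> 0 <= r.
  move=> r [x [u [c [hu ->]]]].
  have := ub_ge hA hu.
  have := hinner_pos (hadd x u). hexp. rewrite (hinner_sym u x). lra.
have Sne : S (hinner y0 v0 + hinner y0 y0 / 2 + hinner v0 v0 / 2).
  exists y0, v0, (hinner y0 v0); split => //.
  move=> y v hyv. have := Hm _ _ _ _ hy0 hyv. hexp. lra.
have hb : bound (fun r => S (- r)).
  exists 0 => r hr. have := S0 _ hr. lra.
have hSne : exists r, S (- r).
  exists (- (hinner y0 v0 + hinner y0 y0 / 2 + hinner v0 v0 / 2)). by rewrite Ropp_involutive.
have [M [hMub hMl]] := completeness _ hb hSne.
pose m := - M.
have hmlow : forall r, S r -> m <= r.
  move=> r hr. have : S (- - r) by rewrite Ropp_involutive.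
  move/hMub. rewrite /m. lra.
have happ : forall eps, 0 < eps -> exists r, S r /\ r < m + eps.
  move=> eps he. apply: NNPP => hne.
  have : M <= - (m + eps).
    apply: hMl => r hr. apply: Rnot_lt_le => hlt. apply: hne.
    exists (- r); split => //. lra.
  rewrite /m. lra.
have [f hf] : exists f : nat -> (H * H * R)%type, forall k,
   ubd A (f k).1.1 (f k).1.2 (f k).2 /\
   (f k).2 + hinner (f k).1.1 (f k).1.1 / 2 + hinner (f k).1.2 (f k).1.2 / 2 < m + / (INR k + 1).
  apply: (@choice_nat _ (fun k (t : (H * H * R)%type) => ubd A t.1.1 t.1.2 t.2 /\
   t.2 + hinner t.1.1 t.1.1 / 2 + hinner t.1.2 t.1.2 / 2 < m + / (INR k + 1))) => k.
  have hk : 0 < / (INR k + 1) by apply: Rinv_0_lt_compat; have := pos_INR k; lra.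
  have [r [[x [u [c [hu ->]]]] hr]] := happ _ hk.
  by exists (x, u, c).
pose X k := (f k).1.1. pose U k := (f k).1.2. pose C k := (f k).2.
have hseq : forall k, ubd A (X k) (U k) (C k) /\
   C k + hinner (X k) (X k) / 2 + hinner (U k) (U k) / 2 < m + / (INR k + 1).
  by move=> k; apply: hf.
clearbody X U C. clear hf f.
have hcauchy : forall j k,
   hinner (hsub (X j) (X k)) (hsub (X j) (X k)) + hinner (hsub (U j) (U k)) (hsub (U j) (U k))
   <= 4 * (/ (INR j + 1) + / (INR k + 1)).
  move=> j k.
  have [hj1 hj2] := hseq j. have [hk1 hk2] := hseq k.
  have hmid : ubd A (hlin (1/2) (X j) (1/2) (X k)) (hlin (1/2) (U j) (1/2) (U k)) ((C j + C k) / 2).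
    move=> y v hyv. have := hj1 _ _ hyv. have := hk1 _ _ hyv. hexp. lra.
  have := hmlow _ (ex_intro _ _ (ex_intro _ _ (ex_intro _ _ (conj hmid erefl)))).
  hexp. rewrite (hinner_sym (X k) (X j)) (hinner_sym (U k) (U j)). lra.
have hsub_nn : forall a b : H, 0 <= hinner (hsub a b) (hsub a b) by move=> a b; apply: hinner_pos.
have cauchy_seq : forall Y : nat -> H,
   (forall j k, hinner (hsub (Y j) (Y k)) (hsub (Y j) (Y k)) <= 4 * (/ (INR j + 1) + / (INR k + 1))) ->
   exists l, forall eps, 0 < eps -> exists N, forall p, (N <= p)%nat ->
        sqrt (hinner (hadd (Y p) (hopp l)) (hadd (Y p) (hopp l))) < eps.
  move=> Y hY. apply: hcomplete => eps he.
  have he2 : 0 < eps * eps / 8 by nra.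
  have [N [hN hNp]] := archimed_cor1 _ he2.
  exists N => p q hp hq.
  apply: sqrt_lt_sq => //; first exact: hsub_nn.
  have := hY p q. have := INR_inv_le hp. have := INR_inv_le hq.
  have : / (INR N + 1) <= / INR N.
    have : (0 < INR N).
      exact: lt_0_INR.
    move=> h0. apply: Rinv_le_contravar; lra.
  rewrite /hsub => *. lra.
have [xs hxs] : exists l, forall eps, 0 < eps -> exists N, forall p, (N <= p)%nat ->
        sqrt (hinner (hadd (X p) (hopp l)) (hadd (X p) (hopp l))) < eps.
  apply: cauchy_seq => j k. have := hcauchy j k. have := hsub_nn (U j) (U k). lra.
have [us hus] : exists l, forall eps, 0 < eps -> exists N, forall p, (N <= p)%nat ->
        sqrt (hinner (hadd (U p) (hopp l)) (hadd (U p) (hopp l))) < eps.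
  apply: cauchy_seq => j k. have := hcauchy j k. have := hsub_nn (X j) (X k). lra.
pose cs := m - hinner xs xs / 2 - hinner us us / 2.
have hcs : ubd A xs us cs.
  move=> y v hyv. apply: Rle_plus_epsilon => eta heta.
  pose W1 := hadd xs v. pose W2 := hadd y us.
  have hW : 0 <= hinner W1 W1 + hinner W2 W2.
    have := hinner_pos W1. have := hinner_pos W2. lra.
  have [t [ht hWt]] : exists t, 0 < t /\ (hinner W1 W1 + hinner W2 W2) * / t <= eta / 4.
    move: hW. move: (hinner W1 W1 + hinner W2 W2) => a ha.
    exists (4 * (a + 1) / eta). split; first by apply: Rdiv_lt_0_compat; lra.
    rewrite Rinv_div.
    have -> : a * (eta / (4 * (a + 1))) = (eta / 4) * (a / (a + 1)) by fld.
    have : a / (a + 1) <= 1.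
      apply: (Rmult_le_reg_r (a + 1)); first lra.
      rewrite /Rdiv Rmult_assoc Rinv_l; lra.
    move=> h. have : 0 < eta / 4 by lra. nra.
  have [e [he he1]] : exists e, 0 < e /\ e * e <= eta / (4 * t).
    have h4 : 0 < eta / (4 * t) by apply: Rdiv_lt_0_compat; lra.
    move: h4. move: (eta / (4 * t)) => b hbb.
    exists (Rmin 1 b). split; first by apply: Rmin_pos; lra.
    have := Rmin_l 1 b. have := Rmin_r 1 b. have : 0 < Rmin 1 b by apply: Rmin_pos; lra.
    move: (Rmin 1 b) => r. nra.
  have [N1 hN1] := hxs e he. have [N2 hN2] := hus e he.
  have heta4 : 0 < eta / 4 by lra.
  have [N0 [hN0 hN0p]] := archimed_cor1 _ heta4.
  pose k := maxn N0 (maxn N1 N2).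
  have hk1 := hN1 k ltac:(by rewrite /k leq_max leq_max leqnn orbT).
  have hk2 := hN2 k ltac:(by rewrite /k leq_max leq_max leqnn !orbT).
  have hk0 : / (INR k + 1) < eta / 4.
    have : (N0 <= k)%nat by rewrite /k leq_max leqnn.
    move/INR_inv_le => h. have : / (INR N0 + 1) <= / INR N0.
      have h0 : 0 < INR N0 by apply: lt_0_INR.
      apply: Rinv_le_contravar; lra.
    lra.
  have [hu hk] := hseq k.
  have hpk := hu _ _ hyv.
  have D1 := sq_of_sqrt_lt (hinner_pos _) hk1.
  have D2 := sq_of_sqrt_lt (hinner_pos _) hk2.
  have c1 := cs_bound (hadd (X k) (hopp xs)) W1 ht.
  have c2 := cs_bound (hadd (U k) (hopp us)) W2 ht.
  have p1 := hinner_pos (hadd (X k) (hopp xs)).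
  have p2 := hinner_pos (hadd (U k) (hopp us)).
  have E1 : hinner xs v + hinner xs xs / 2 - hinner (X k) v - hinner (X k) (X k) / 2
     = - hinner (hadd (X k) (hopp xs)) W1 - hinner (hadd (X k) (hopp xs)) (hadd (X k) (hopp xs)) / 2.
    rewrite /W1; hexp. rewrite (hinner_sym xs (X k)). field.
  have E2 : hinner y us + hinner us us / 2 - hinner y (U k) - hinner (U k) (U k) / 2
     = - hinner (hadd (U k) (hopp us)) W2 - hinner (hadd (U k) (hopp us)) (hadd (U k) (hopp us)) / 2.
    rewrite /W2; hexp. rewrite (hinner_sym (U k) y) (hinner_sym us y) (hinner_sym us (U k)). field.
  move: E1 E2 c1 c2 p1 p2 D1 D2.
  move: (hadd (X k) (hopp xs)) (hadd (U k) (hopp us)) => d1 d2.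
  move: (hinner d1 d1) (hinner d2 d2) (hinner d1 W1) (hinner d2 W2) => a1 a2 b1 b2.
  move=> E1 E2 c1 c2 p1 p2 D1 D2.
  have t1 : t * a1 <= eta / 4.
    apply: (Rle_trans _ (t * (eta / (4 * t)))); last by right; fld.
    apply: Rmult_le_compat_l; lra.
  have t2 : t * a2 <= eta / 4.
    apply: (Rle_trans _ (t * (eta / (4 * t)))); last by right; fld.
    apply: Rmult_le_compat_l; lra.
  rewrite /cs. rewrite Rmult_plus_distr_r in hWt.
  move: hpk hk. lra.
have hK : forall y v, A y v ->
   0 <= hinner y v - cs - hinner xs xs + hinner xs y - hinner us us + hinner us v.
  move=> y v hyv.
  apply: (@small_lam _ ((hinner (hsub xs y) (hsub xs y) + hinner (hsub us v) (hsub us v)) / 2)).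
    have := hinner_pos (hsub xs y). have := hinner_pos (hsub us v). lra.
  move=> lam [hl0 hl1].
  have hub : ubd A (hlin (1 - lam) xs lam y) (hlin (1 - lam) us lam v) ((1 - lam) * cs + lam * hinner y v).
    move=> y' v' hyv'.
    have h1 := hcs _ _ hyv'. have h2 := Hm _ _ _ _ hyv hyv'.
    have h1' : (1 - lam) * (hinner xs v' + hinner y' us - hinner y' v') <= (1 - lam) * cs.
      apply: Rmult_le_compat_l; lra.
    have h2' : 0 <= lam * hinner (hsub y y') (hsub v v') by apply: Rmult_le_pos; lra.
    move: h2'. hexp. lra.
  have := hmlow _ (ex_intro _ _ (ex_intro _ _ (ex_intro _ _ (conj hub erefl)))).
  rewrite /cs. hexp.
  rewrite ?(hinner_sym y xs) ?(hinner_sym v us) => hm.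
  apply: (Rmult_le_reg_l lam) => //. rewrite Rmult_0_r. lra.
have hcs_ge := ub_ge hA hcs.
have hApq : A (hopp us) (hopp xs).
  apply: (rel_in hA) => y v hyv. have := hK _ _ hyv. have := hinner_pos (hadd xs us). hexp.
  rewrite ?(hinner_sym us xs) ?(hinner_sym y xs) ?(hinner_sym v us). lra.
have hz : hadd xs us = hzero.
  apply: hinner_def. apply: Rle_antisym; last exact: hinner_pos.
  have := hK _ _ hApq. hexp. rewrite ?(hinner_sym us xs). lra.
exists (hopp us), (hopp xs). split => //.
apply: veq => z. have := congr1 (fun p => hinner p z) hz. simpl. hexp. lra.
Qed.


Lemma minty (H : Hilbert) (A : H -> H -> Prop) (gam : R) (x : H) :
  maximal_monotone A -> 0 < gam ->
  exists y a, A y a /\ x = hadd (hscal 1 y) (hscal 1 (hscal gam a)).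
Proof.
move=> [Hm Hmax] hg.
pose C := fun y u => exists a, A y a /\ u = hadd (hscal gam a) (hopp x).
have hC : maximal_monotone C.
  split.
    move=> y u y' u' [a [ha ->]] [a' [ha' ->]].
    have := Hm _ _ _ _ ha ha'. hexp => h.
    have := Rmult_le_pos _ _ (Rlt_le _ _ hg) h. move=> ?. lra.
  move=> M hM hCM y u hyu.
  pose M' := fun y a => M y (hadd (hscal gam a) (hopp x)).
  have hM' : monotone M'.
    move=> p a q b hpa hqb. have := hM _ _ _ _ hpa hqb. hexp => h.
    apply: (Rmult_le_reg_l gam) => //. rewrite Rmult_0_r. lra.
  have hAM : forall p a, A p a -> M' p a.
    move=> p a hpa. apply: hCM. by exists a.
  have e : u = hadd (hscal gam (hscal (/ gam) (hadd u x))) (hopp x).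
    apply: veq => z. hexp. field. lra.
  exists (hscal (/ gam) (hadd u x)); split => //.
  apply: (Hmax M' hM' hAM). by rewrite /M' -e.
have [y [u [[a [ha ->]] h0]]] := minty0 hC.
exists y, a; split => //.
apply: veq => z. have := congr1 (fun p => hinner p z) h0. simpl. hexp. lra.
Qed.

Definition xbar (H : Hilbert) (n : nat) (w : 'I_n -> R) (x : prodH H n) : H :=
  \big[hadd/hzero]_(i < n) hscal (w i) (x i).
Definition Pc (H : Hilbert) (n : nat) (w : 'I_n -> R) (x : prodH H n) : prodH H n :=
  fun _ => xbar w x.

Lemma sum_mul_l n (c : R) (F : 'I_n -> R) :
  \big[Rplus/0]_(i < n) (c * F i) = c * \big[Rplus/0]_(i < n) F i.
Proof.
symmetry. apply: (big_morph (fun t => c * t)).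
- move=> a b. by rewrite Rmult_plus_distr_l.
- by rewrite Rmult_0_r.
Qed.

Lemma sum_mul_r n (c : R) (F : 'I_n -> R) :
  \big[Rplus/0]_(i < n) (F i * c) = (\big[Rplus/0]_(i < n) F i) * c.
Proof.
symmetry. apply: (big_morph (fun t => t * c)).
- move=> a b. by rewrite Rmult_plus_distr_r.
- by rewrite Rmult_0_l.
Qed.

Lemma sum_add n (F G : 'I_n -> R) :
  \big[Rplus/0]_(i < n) (F i + G i) = \big[Rplus/0]_(i < n) F i + \big[Rplus/0]_(i < n) G i.
Proof. exact: big_split. Qed.

Lemma sum_ext n (F G : 'I_n -> R) : (forall i, F i = G i) ->
  \big[Rplus/0]_(i < n) F i = \big[Rplus/0]_(i < n) G i.
Proof. move=> h. apply: eq_bigr => i _. exact: h. Qed.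

Lemma sum_le n (F G : 'I_n -> R) : (forall i, F i <= G i) ->
  \big[Rplus/0]_(i < n) F i <= \big[Rplus/0]_(i < n) G i.
Proof.
move=> h. apply: (big_ind2 (fun a b => a <= b)).
- lra.
- move=> *; lra.
- move=> i _; exact: h.
Qed.

Lemma sum_nonneg n (F : 'I_n -> R) : (forall i, 0 <= F i) -> 0 <= \big[Rplus/0]_(i < n) F i.
Proof.
move=> h. apply: (big_ind (fun a => 0 <= a)).
- lra.
- move=> *; lra.
- move=> i _; exact: h.
Qed.

Lemma hinner_xbar_l (H : Hilbert) n (w : 'I_n -> R) (x : prodH H n) (z : H) :
  hinner (xbar w x) z = \big[Rplus/0]_(i < n) (w i * hinner (x i) z).
Proof.
rewrite /xbar. rewrite (big_morph (fun v => hinner v z) (id1 := 0) (op1 := Rplus)).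
- apply: sum_ext => i. by rewrite hinner_scal_l.
- move=> a b. by rewrite hinner_add_l.
- by rewrite hinner_zero_l.
Qed.

Lemma xbar_const (H : Hilbert) n (w : 'I_n -> R) (c : H) :
  \big[Rplus/0]_(i < n) w i = 1 -> xbar w (fun _ => c) = c.
Proof.
move=> hw1. apply: veq => z. rewrite hinner_xbar_l sum_mul_r hw1. ring.
Qed.

Lemma pinner_plin_l (H : Hilbert) n (w : 'I_n -> R) a (x : prodH H n) b y z :
  pinner w (plin a x b y) z = a * pinner w x z + b * pinner w y z.
Proof.
rewrite /pinner -!sum_mul_l -sum_add. apply: sum_ext => i.
rewrite /plin /hlin hinner_add_l !hinner_scal_l. ring.
Qed.

Lemma pinner_sym (H : Hilbert) n (w : 'I_n -> R) (x y : prodH H n) :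
  pinner w x y = pinner w y x.
Proof. apply: sum_ext => i. by rewrite hinner_sym. Qed.

Lemma pinner_plin_r (H : Hilbert) n (w : 'I_n -> R) a (x : prodH H n) b y z :
  pinner w z (plin a x b y) = a * pinner w z x + b * pinner w z y.
Proof. by rewrite pinner_sym pinner_plin_l !(pinner_sym _ z). Qed.

Lemma pinner_const_l (H : Hilbert) n (w : 'I_n -> R) (c : H) (v : prodH H n) :
  pinner w (fun _ => c) v = hinner c (xbar w v).
Proof.
rewrite hinner_sym hinner_xbar_l. apply: sum_ext => i. by rewrite hinner_sym.
Qed.

Lemma pinner_nonneg (H : Hilbert) n (w : 'I_n -> R) (x : prodH H n) :
  (forall i, 0 <= w i) -> 0 <= pinner w x x.
Proof.
move=> hw. apply: sum_nonneg => i. apply: Rmult_le_pos => //. exact: hinner_pos.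
Qed.

Lemma xbar_plin (H : Hilbert) n (w : 'I_n -> R) a (x : prodH H n) b y :
  xbar w (plin a x b y) = hlin a (xbar w x) b (xbar w y).
Proof.
apply: veq => z. rewrite hinner_xbar_l /hlin hinner_add_l !hinner_scal_l !hinner_xbar_l.
rewrite -!sum_mul_l -sum_add. apply: sum_ext => i. rewrite /plin. hexp. ring.
Qed.

Lemma Pc_plin (H : Hilbert) n (w : 'I_n -> R) a (x : prodH H n) b y :
  Pc w (plin a x b y) = plin a (Pc w x) b (Pc w y).
Proof. apply: functional_extensionality => i. by rewrite /Pc xbar_plin. Qed.

Ltac peqt := apply: functional_extensionality => ?; rewrite /plin /Pc /prod_fun /=;
  apply: veq => ?; hexp; field; repeat split; try lra.

Lemma pinner_P_orth (H : Hilbert) n (w : 'I_n -> R) (e : prodH H n) :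
  \big[Rplus/0]_(i < n) w i = 1 ->
  pinner w (Pc w e) e = pinner w (Pc w e) (Pc w e).
Proof.
move=> hw1. rewrite /Pc !pinner_const_l. by rewrite (xbar_const _ hw1).
Qed.

Lemma resN_iff (H : Hilbert) n (w : 'I_n -> R) (i0 : 'I_n)
  (hw1 : \big[Rplus/0]_(i < n) w i = 1) (x p : prodH H n) :
  resolvent plin (normal_cone_S w) x p <-> p = Pc w x.
Proof.
split.
- move=> [m [[hdiag hperp] hx]].
  apply: functional_extensionality => i. rewrite /Pc. apply: veq => z.
  rewrite hinner_xbar_l.
  have hm0 := hperp (fun _ => z) (fun _ _ => erefl).
  rewrite /pinner in hm0.
  have -> : \big[Rplus/0]_(j < n) (w j * hinner (x j) z) =
      \big[Rplus/0]_(j < n) (w j * hinner (p i) z + w j * hinner z (m j)).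
    apply: sum_ext => j. rewrite (congr1 (fun f => f j) hx) /plin /hlin (hdiag j i).
    hexp. rewrite (hinner_sym (m j) z). ring.
  by rewrite sum_add hm0 sum_mul_r hw1 Rmult_1_l Rplus_0_r.
- move=> ->. exists (plin 1 x (-1) (Pc w x)). split; first split.
  + by move=> ? ?.
  + move=> s hs.
    have -> : s = fun _ => s i0 by apply: functional_extensionality => j; exact: hs.
    rewrite pinner_const_l xbar_plin /Pc (xbar_const _ hw1). hexp. ring.
  + peqt.
Qed.

Lemma comp_key (H : Hilbert) (A : H -> H -> Prop) (g : R) (x x' q q' a a' : H) :
  monotone A -> 0 < g -> A q a -> A q' a' ->
  x = hadd (hscal 1 q) (hscal 1 (hscal g a)) -> x' = hadd (hscal 1 q') (hscal 1 (hscal g a')) ->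
  hinner (hlin 1 q (-1) q') (hlin 1 q (-1) q') <= hinner (hlin 1 q (-1) q') (hlin 1 x (-1) x').
Proof.
move=> Hm hg ha ha' -> ->.
have := Hm _ _ _ _ ha ha'. hexp => h.
have := Rmult_le_pos _ _ (Rlt_le _ _ hg) h.
rewrite ?(hinner_sym q' q) => h2. lra.
Qed.

Lemma resG_comp (H : Hilbert) n (g : 'I_n -> R) (A : 'I_n -> H -> H -> Prop) (x q : prodH H n) :
  resolvent plin (scaled_prod_op g A) x q ->
  forall i, exists a, A i (q i) a /\ x i = hadd (hscal 1 (q i)) (hscal 1 (hscal (g i) a)).
Proof.
move=> [m [hm hx]] i. have [a [ha hmi]] := hm i. exists a; split => //.
by rewrite (congr1 (fun f => f i) hx) /plin /hlin hmi.
Qed.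

Lemma resG_firm (H : Hilbert) n (w : 'I_n -> R) (g : 'I_n -> R) (A : 'I_n -> H -> H -> Prop)
  (hw : forall i, 0 <= w i) (hA : forall i, monotone (A i)) (hg : forall i, 0 < g i)
  (x x' q q' : prodH H n) :
  resolvent plin (scaled_prod_op g A) x q ->
  resolvent plin (scaled_prod_op g A) x' q' ->
  pinner w (plin 1 q (-1) q') (plin 1 q (-1) q') <= pinner w (plin 1 q (-1) q') (plin 1 x (-1) x').
Proof.
move=> h1 h2. apply: sum_le => i.
have [a [ha hx]] := resG_comp h1 i. have [a' [ha' hx']] := resG_comp h2 i.
apply: Rmult_le_compat_l => //. rewrite /plin.
exact: (comp_key (hA i) (hg i) ha ha' hx hx').
Qed.

Lemma resG_uniq (H : Hilbert) n (g : 'I_n -> R) (A : 'I_n -> H -> H -> Prop)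
  (hA : forall i, monotone (A i)) (hg : forall i, 0 < g i)
  (x q q' : prodH H n) :
  resolvent plin (scaled_prod_op g A) x q ->
  resolvent plin (scaled_prod_op g A) x q' -> q = q'.
Proof.
move=> h1 h2. apply: functional_extensionality => i.
have [a [ha hx]] := resG_comp h1 i. have [a' [ha' hx']] := resG_comp h2 i.
have k := comp_key (hA i) (hg i) ha ha' hx hx'.
have e0 : hinner (hlin 1 (q i) (-1) (q' i)) (hlin 1 (x i) (-1) (x i)) = 0.
  hexp. ring.
rewrite e0 in k.
have hz : hlin 1 (q i) (-1) (q' i) = hzero.
  apply: hinner_def. apply: Rle_antisym => //. exact: hinner_pos.
apply: veq => z. have := congr1 (fun p => hinner p z) hz. simpl. hexp. lra.
Qed.

Lemma resG_ex (H : Hilbert) n (g : 'I_n -> R) (A : 'I_n -> H -> H -> Prop)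
  (hA : forall i, maximal_monotone (A i)) (hg : forall i, 0 < g i) (x : prodH H n) :
  exists q, resolvent plin (scaled_prod_op g A) x q.
Proof.
pose f := fun i => proj1_sig (constructive_indefinite_description _
     (minty (x i) (hA i) (hg i))).
have hf : forall i, exists a, A i (f i) a /\ x i = hadd (hscal 1 (f i)) (hscal 1 (hscal (g i) a)).
  move=> i. exact: (proj2_sig (constructive_indefinite_description _ (minty (x i) (hA i) (hg i)))).
pose af := fun i => proj1_sig (constructive_indefinite_description _ (hf i)).
have haf : forall i, A i (f i) (af i) /\ x i = hadd (hscal 1 (f i)) (hscal 1 (hscal (g i) (af i))).
  move=> i. exact: (proj2_sig (constructive_indefinite_description _ (hf i))).
exists f, (fun i => hscal (g i) (af i)). split.
- move=> i. exists (af i). split => //. exact: (haf i).1.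
- apply: functional_extensionality => i. rewrite /plin /hlin. exact: (haf i).2.
Qed.

Lemma Bcoco (H : Hilbert) (B : H -> H) (beta : R) : 0 < beta ->
  firmly_nonexpansive (@hlin H) (fun x y => hnorm (hsub x y)) (fun x => hscal beta (B x)) ->
  forall x y, beta * hinner (hlin 1 (B x) (-1) (B y)) (hlin 1 (B x) (-1) (B y))
      <= hinner (hlin 1 (B x) (-1) (B y)) (hlin 1 x (-1) y).
Proof.
move=> hb [_ [Rn [hRn hiff]]] x y.
have ex : hscal beta (B x) = hlin (1 - 1/2) x (1/2) (Rn x) := proj1 (hiff x (hscal beta (B x))) erefl.
have ey : hscal beta (B y) = hlin (1 - 1/2) y (1/2) (Rn y) := proj1 (hiff y (hscal beta (B y))) erefl.
have hN : hinner (hsub (Rn x) (Rn y)) (hsub (Rn x) (Rn y)) <= hinner (hsub x y) (hsub x y).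
  apply: sqrt_le_0; try exact: hinner_pos. exact: hRn.
have k : hinner (hlin 1 (hscal beta (B x)) (-1) (hscal beta (B y))) (hlin 1 (hscal beta (B x)) (-1) (hscal beta (B y)))
   <= hinner (hlin 1 (hscal beta (B x)) (-1) (hscal beta (B y))) (hlin 1 x (-1) y).
  rewrite ex ey. move: hN. hexp.
  rewrite ?(hinner_sym y x) ?(hinner_sym (Rn x) x) ?(hinner_sym (Rn y) x) ?(hinner_sym (Rn x) y)
    ?(hinner_sym (Rn y) y) ?(hinner_sym (Rn y) (Rn x)). move=> ?. lra.
move: k. hexp. rewrite ?(hinner_sym (B y) (B x)) => k.
apply: (Rmult_le_reg_l beta) => //. lra.
Qed.

Lemma real_E3 (UU EE BB UE EB UB k2 kt : R) :
  0 < k2 -> 0 <= kt -> kt * (1 + k2) <= k2 ->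
  BB <= EE - (EE - 2*EB + BB) ->
  EE <= UU - k2 * (UU - 2*UE + EE) ->
  0 <= UU - 2*UB + BB ->
  0 <= k2*k2*(UU - 2*UE + EE) - 2*k2*(UE - UB - EE + EB) + (EE - 2*EB + BB) ->
  BB <= UU - kt * (UU - 2*UB + BB).
Proof.
move=> hk2 hkt hk h1 h2 hZ hN.
have e1 : (1 + k2) * (k2 * (UU - 2*UE + EE) + (EE - 2*EB + BB)) - k2 * (UU - 2*UB + BB)
   = k2*k2*(UU - 2*UE + EE) - 2*k2*(UE - UB - EE + EB) + (EE - 2*EB + BB) by ring.
have h3 : kt * (UU - 2*UB + BB) * (1 + k2) <= k2 * (UU - 2*UB + BB).
  rewrite Rmult_assoc (Rmult_comm _ (1 + k2)) -Rmult_assoc.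
  apply: Rmult_le_compat_r => //.
have h4 : kt * (UU - 2*UB + BB) <= k2 * (UU - 2*UE + EE) + (EE - 2*EB + BB).
  apply: (Rmult_le_reg_r (1 + k2)); first lra.
  lra.
lra.
Qed.

Lemma real_avg (BB UU UB a : R) : 0 < a < 1 ->
  BB <= UU - (1 - a) / a * (UU - 2 * UB + BB) ->
  (1 / a) * ((1 / a) * BB + (- (1 - a) / a) * UB) + (- (1 - a) / a) * ((1 / a) * UB + (- (1 - a) / a) * UU) <= UU.
Proof.
move=> [ha0 ha1] h.
have h' : a * BB <= a * (UU - (1 - a) / a * (UU - 2 * UB + BB)) by apply: Rmult_le_compat_l; lra.
have e : a * (UU - (1 - a) / a * (UU - 2 * UB + BB)) = a * UU - (1 - a) * (UU - 2 * UB + BB) by field; lra.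
rewrite e in h'.
have e2 : (1 / a) * ((1 / a) * BB + (- (1 - a) / a) * UB) + (- (1 - a) / a) * ((1 / a) * UB + (- (1 - a) / a) * UU)
   = (BB - 2 * (1 - a) * UB + (1 - a) * (1 - a) * UU) * / (a * a) by field; lra.
rewrite e2.
have haa : 0 < a * a by nra.
apply: (Rmult_le_reg_r (a * a)) => //.
rewrite Rmult_assoc Rinv_l; last lra. nra.
Qed.

Lemma alpha_facts (beta gam : R) : 0 < beta -> 0 < gam < 2 * beta ->
  0 < Rmax (2/3) (2 / (1 + 2 * beta / gam)) < 1 /\
  (1 - Rmax (2/3) (2 / (1 + 2 * beta / gam))) / Rmax (2/3) (2 / (1 + 2 * beta / gam)) * (2 * beta / gam)
    <= 2 * beta / gam - 1.
Proof.
move=> hb [hg0 hg1].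
have hs : 1 < 2 * beta / gam.
  have e : 2 * beta / gam * gam = 2 * beta by field; lra.
  apply: (Rmult_lt_reg_r gam) => //. lra.
move: hs. move: (2 * beta / gam) => s hs.
have h1s : 0 < 1 + s by lra.
rewrite /Rmax. case: Rle_dec => h.
- have hs2 : s <= 2.
    have e : 2 / (1 + s) * (1 + s) = 2 by field; lra.
    have := Rmult_le_compat_r (1 + s) _ _ (Rlt_le _ _ h1s) h. rewrite e. lra.
  have ha : 0 < 2 / (1 + s) by apply: Rdiv_lt_0_compat; lra.
  have e : (1 - 2 / (1 + s)) / (2 / (1 + s)) = (s - 1) / 2 by field; lra.
  rewrite e. split; last nra.
  split => //. apply: (Rmult_lt_reg_r (1 + s)) => //.
  have e2 : 2 / (1 + s) * (1 + s) = 2 by field; lra.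
  rewrite e2. lra.
- have hs2 : 2 < s.
    apply: Rnot_le_lt => hc. apply: h.
    have e : 2 / (1 + s) * (1 + s) = 2 by field; lra.
    apply: (Rmult_le_reg_r (1 + s)) => //. rewrite e. lra.
  split; first lra. lra.
Qed.

Unset Implicit Arguments.

Ltac pexp := repeat progress rewrite ?pinner_plin_l ?pinner_plin_r.

Theorem proposition4p5
  (H : Hilbert) (n : nat) (hn : (1 <= n)%nat)
  (w : 'I_n -> R)
  (hw : forall i, 0 < w i < 1)
  (hw1 : \big[Rplus/0]_(i < n) w i = 1)
  (A : 'I_n -> H -> H -> Prop)
  (hA : forall i, maximal_monotone (A i))
  (B : H -> H) (beta : R) (hbeta : 0 < beta)
  (hB : firmly_nonexpansive (@hlin H) (fun x y => hnorm (hsub x y))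
          (fun x => hscal beta (B x))) :
  forall (g : 'I_n -> R) (gam : R),
    (forall i, 0 < g i) ->
    0 < gam < 2 * beta ->
    averaged_rel plin (pdist w)
      (Rmax (2/3) (2 / (1 + 2 * beta / gam)))
      (rel_comp (T1 w g A) (T2 w gam B)).
Proof.
move=> g gam hg hgam.
have hw0 : forall i, 0 <= w i by move=> i; have := hw i; lra.
have i0 : 'I_n := Ordinal hn.
have hAm : forall i, monotone (A i) by move=> i; exact: (hA i).1.
have [Jf hJ] : exists Jf : prodH H n -> prodH H n,
    forall x q, resolvent plin (scaled_prod_op g A) x q <-> q = Jf x.
  exists (fun x => proj1_sig (constructive_indefinite_description _ (resG_ex hA hg x))).
  move=> x q. have hs := proj2_sig (constructive_indefinite_description _ (resG_ex hA hg x)).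
  split => [h | ->] //. exact: (resG_uniq hAm hg h hs).
have hJr : forall r, resolvent plin (scaled_prod_op g A) r (Jf r) by move=> r; apply/hJ.
pose T2f := fun x => plin 1 x (-gam) (prod_fun B (Pc w x)).
pose T1f := fun a => plin (1/2) (plin 2 (Jf (plin 2 (Pc w a) (-1) a)) (-1) (plin 2 (Pc w a) (-1) a)) (1/2) a.
pose F := fun x => T1f (T2f x).
have hrel : forall x z, rel_comp (T1 w g A) (T2 w gam B) x z <-> z = F x.
  move=> x z. split.
  - move=> [y [[p [hp ->]] [y1 [v [[p1 [hp1 ->]] [[q [hq ->]] ->]]]]]].
    move/(resN_iff i0 hw1): hp => Ep. move/(resN_iff i0 hw1): hp1 => Ep1. move/hJ: hq => Eq. subst. by rewrite /F /T1f /T2f.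
  - move=> ->. exists (T2f x). split.
    + exists (Pc w x). split => //. exact/(resN_iff i0 hw1).
    + exists (plin 2 (Pc w (T2f x)) (-1) (T2f x)).
      exists (plin 2 (Jf (plin 2 (Pc w (T2f x)) (-1) (T2f x))) (-1) (plin 2 (Pc w (T2f x)) (-1) (T2f x))).
      split; last split => //.
      * exists (Pc w (T2f x)). split => //. exact/(resN_iff i0 hw1).
      * by exists (Jf (plin 2 (Pc w (T2f x)) (-1) (T2f x))).
have E1 : forall a a', pinner w (plin 1 (T1f a) (-1) (T1f a')) (plin 1 (T1f a) (-1) (T1f a'))
    <= pinner w (plin 1 a (-1) a') (plin 1 a (-1) a')
       - pinner w (plin 1 (plin 1 a (-1) a') (-1) (plin 1 (T1f a) (-1) (T1f a')))
                  (plin 1 (plin 1 a (-1) a') (-1) (plin 1 (T1f a) (-1) (T1f a'))).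
  move=> a a'.
  set r := plin 2 (Pc w a) (-1) a. set r' := plin 2 (Pc w a') (-1) a'.
  have hf := resG_firm hw0 hAm hg (hJr r) (hJr r').
  have V1 : plin 1 r (-1) r' = plin 2 (Pc w (plin 1 a (-1) a')) (-1) (plin 1 a (-1) a').
    rewrite Pc_plin /r /r'. peqt.
  have V2 : plin 1 (T1f a) (-1) (T1f a') =
      plin 1 (plin 1 (Jf r) (-1) (Jf r')) 1 (plin 1 (plin 1 a (-1) a') (-1) (Pc w (plin 1 a (-1) a'))).
    rewrite Pc_plin /T1f -/r -/r' /r /r'. peqt.
  have orth := pinner_P_orth (plin 1 a (-1) a') hw1.
  rewrite V2 {}V1 in hf *.
  move: hf orth. clearbody r r'.
  move: (plin 1 (Jf r) (-1) (Jf r')) (plin 1 a (-1) a') => j e.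
  move: (Pc w e) => pe hf orth.
  pexp. move: hf. pexp.
  rewrite ?(pinner_sym w e j) ?(pinner_sym w pe j) ?(pinner_sym w e pe) => hf.
  move: orth. rewrite ?(pinner_sym w e pe) => orth.
  lra.
have hk2 : 0 < 2 * beta / gam - 1.
  have e : 2 * beta / gam * gam = 2 * beta by field; lra.
  case: hgam => hg0 hg1.
  have : 1 < 2 * beta / gam by apply: (Rmult_lt_reg_r gam) => //; lra.
  lra.
have E2 : forall x y, pinner w (plin 1 (T2f x) (-1) (T2f y)) (plin 1 (T2f x) (-1) (T2f y))
    <= pinner w (plin 1 x (-1) y) (plin 1 x (-1) y)
       - (2 * beta / gam - 1) * pinner w (plin 1 (plin 1 x (-1) y) (-1) (plin 1 (T2f x) (-1) (T2f y)))
            (plin 1 (plin 1 x (-1) y) (-1) (plin 1 (T2f x) (-1) (T2f y))).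
  move=> x y.
  pose d := plin 1 (prod_fun B (Pc w x)) (-1) (prod_fun B (Pc w y)).
  have V4 : plin 1 (T2f x) (-1) (T2f y) = plin 1 (plin 1 x (-1) y) (-gam) d by rewrite /T2f /d; peqt.
  have coco : beta * pinner w d d <= pinner w d (plin 1 x (-1) y).
    have -> : d = (fun _ => hlin 1 (B (xbar w x)) (-1) (B (xbar w y))) by [].
    rewrite !pinner_const_l (xbar_const _ hw1) xbar_plin. exact: Bcoco.
  rewrite V4. move: coco. clearbody d. move: (plin 1 x (-1) y) => u coco.
  pexp. rewrite ?(pinner_sym w d u).
  have hk : (2 * beta / gam - 1) * gam = 2 * beta - gam by field; case: hgam => ? ?; lra.
  move: hk. move: (2 * beta / gam - 1) => k2 hk.
  have := congr1 (fun t => t * (gam * pinner w d d)) hk. simpl => hk'.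
  have hg0 : 0 < gam by case: hgam.
  have := Rmult_le_compat_l gam _ _ (Rlt_le _ _ hg0) coco. move=> c2.
  move: coco. rewrite ?(pinner_sym w u d) => coco.
  lra.
have [ha hk] := alpha_facts hbeta hgam.
move: ha hk. set al := Rmax (2/3) (2 / (1 + 2 * beta / gam)) => ha hk.
split => //.
exists (fun x => plin (1/al) (F x) (-(1-al)/al) x). split.
- move=> x y. rewrite /pdist. apply: sqrt_le_1_alt.
  have V6 : plin 1 (plin (1/al) (F x) (-(1-al)/al) x) (-1) (plin (1/al) (F y) (-(1-al)/al) y)
     = plin (1/al) (plin 1 (F x) (-1) (F y)) (-(1-al)/al) (plin 1 x (-1) y) by peqt.
  rewrite V6.
  have E1' := E1 (T2f x) (T2f y). have E2' := E2 x y.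
  change (T1f (T2f x)) with (F x) in E1'. change (T1f (T2f y)) with (F y) in E1'.
  move: E1' E2'.
  move: (plin 1 (F x) (-1) (F y)) (plin 1 (T2f x) (-1) (T2f y)) (plin 1 x (-1) y) => b e u E1' E2'.
  have hN := pinner_nonneg (plin (2 * beta / gam - 1) (plin 1 u (-1) e) (-1) (plin 1 e (-1) b)) hw0.
  have hZ := pinner_nonneg (plin 1 u (-1) b) hw0.
  move: E1' E2' hN hZ. pexp.
  rewrite ?(pinner_sym w e u) ?(pinner_sym w b e) ?(pinner_sym w b u) => E1' E2' hN hZ.
  have hkt0 : 0 <= (1 - al) / al.
    apply: Rmult_le_pos; first lra. left; apply: Rinv_0_lt_compat; lra.
  have hkt1 : (1 - al) / al * (1 + (2 * beta / gam - 1)) <= 2 * beta / gam - 1.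
    have -> : 1 + (2 * beta / gam - 1) = 2 * beta / gam by ring. exact: hk.
  have key := real_E3 (UU := pinner w u u) (EE := pinner w e e) (BB := pinner w b b)
     (UE := pinner w u e) (EB := pinner w e b) (UB := pinner w u b) hk2 hkt0 hkt1
     ltac:(lra) ltac:(lra) ltac:(lra) ltac:(lra).
  have := real_avg ha key. lra.
- move=> x z. rewrite hrel.
  have eF : F x = plin (1 - al) x al (plin (1/al) (F x) (-(1-al)/al) x) by peqt.
  split => ->; [exact: eF | exact: esym eF].
Qed.
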